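(* Let $g=\begin{pmatrix}a&b\\c&d\end{pmatrix}\in\mathrm{SL}_2(\mathbb R)\setminus S$. Then $$v(g):=\log\big(|ad|^{1/2}+|bc|^{1/2}\big)=\tfrac12\,d_{\mathbb H}\big(g\,(i\mathbb R_+),\ i\mathbb R_+\big)>0.$$
   Context: $s=\{g\in\mathrm{SL}_2(\mathbb R): abcd=0\}$ (equivalently, $g$ maps some point of $\{0,i\infty\}$ to some point of $\{0,i\infty\}$), and $S=s\cup\{g\in\mathrm{SL}_2(\mathbb R): g(iy_1)=iy_2\text{ for some }y_1,y_2>0\}$. $i\mathbb R_+$ is the imaginary axis (geodesic from $0$ to $i\infty$) in the upper half-plane, and $d_{\mathbb H}(A,B)=\inf_{z\in A,w\in B}d_{\mathbb H}(z,w)$ is the hyperbolic distance between sets. *)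

(* Defs.v *)
From Stdlib Require Import Reals.
From Coquelicot Require Import Coquelicot.
Open Scope R_scope.

Definition arcosh (t : R) : R := ln (t + sqrt (t ^ 2 - 1)).

Definition dH (z w : C) : R :=
  arcosh (1 + (Cmod (z - w)) ^ 2 / (2 * Im z * Im w)).

Definition mobius (a b c d : R) (z : C) : C :=
  (RtoC a * z + RtoC b) / (RtoC c * z + RtoC d).

Definition imag_axis (z : C) : Prop := Re z = 0 /\ 0 < Im z.

Definition hdist_sets (A B : C -> Prop) : Rbar :=
  Glb_Rbar (fun r => exists z w, A z /\ B w /\ r = dH z w).

Definition mob_image (a b c d : R) (A : C -> Prop) (z : C) : Prop :=
  exists w, A w /\ z = mobius a b c d w.

Definition in_s (a b c d : R) : Prop := a * b * c * d = 0.
Definition in_S (a b c d : R) : Prop :=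
  in_s a b c d \/
  exists y1 y2, 0 < y1 /\ 0 < y2 /\
    mobius a b c d (0, y1) = ((0, y2) : C).

Definition v (a b c d : R) : R :=
  ln (sqrt (Rabs (a * d)) + sqrt (Rabs (b * c))).

(* Main.v *)
Require Import Defs.
From Stdlib Require Import Reals Lra Psatz.
From Coquelicot Require Import Coquelicot.
Open Scope R_scope.

Lemma mob_iy (a b c d y : R) : d ^ 2 + c ^ 2 * y ^ 2 <> 0 ->
  mobius a b c d (0, y) =
  ((b * d + a * c * y ^ 2) / (d ^ 2 + c ^ 2 * y ^ 2),
   y * (a * d - b * c) / (d ^ 2 + c ^ 2 * y ^ 2)).
Proof.
  intros HD. unfold mobius, Cdiv, Cinv, Cmult, Cplus, RtoC; simpl.
  f_equal; field; intro H; apply HD; nra.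
Qed.

Lemma dH_form (X Y t : R) :
  dH (X, Y) (0, t) = arcosh (1 + (X ^ 2 + (Y - t) ^ 2) / (2 * Y * t)).
Proof.
  unfold dH, Cmod, Cminus, Cplus, Copp; simpl.
  repeat rewrite Rmult_1_r. rewrite sqrt_sqrt; [|pose proof (Rle_0_sqr (X + - 0)); pose proof (Rle_0_sqr (Y + - t)); unfold Rsqr in *; lra]. replace (Y + - t) with (Y - t) by ring; replace (X + - 0) with X by ring; reflexivity.
Qed.

Lemma arcosh_le x y : 1 <= x -> x <= y -> arcosh x <= arcosh y.
Proof.
  intros H1 H2. unfold arcosh. apply ln_le.
  - pose proof (sqrt_pos (x ^ 2 - 1)). lra.
  - assert (x ^ 2 - 1 <= y ^ 2 - 1) by nra. pose proof (sqrt_le_1_alt (x ^ 2 - 1) (y ^ 2 - 1) H). lra.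
Qed.

Lemma Dpos c d y : c <> 0 -> 0 < y -> 0 < d ^ 2 + c ^ 2 * y ^ 2.
Proof.
  intros Hc Hy. assert (0 < c * c) by (destruct (Rtotal_order c 0) as [h|[h|h]]; [nra|contradiction|nra]).
  assert (0 < y * y) by nra. assert (0 <= d * d) by nra.
  assert (0 < c * c * (y * y)) by (apply Rmult_lt_0_compat; auto). simpl; nra.
Qed.

Lemma Kfacts (a b c d : R) : a * d - b * c = 1 -> 0 < a * b * c * d ->
  let K := Rabs (a * d) + Rabs (b * c) in
  K ^ 2 - 1 = 4 * (a * b * c * d) /\ 1 < K /\ arcosh K = 2 * v a b c d.
Proof.
  intros hdet HP K.
  assert (Hsg : (0 < a * d /\ 0 < b * c /\ K = a * d + b * c) \/
                (a * d < 0 /\ b * c < 0 /\ K = - (a * d) - b * c)).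
  { destruct (Rle_lt_dec 0 (a * d)) as [h|h].
    - left. assert (0 < a * d) by (destruct h as [h|h]; [exact h| assert (a*b*c*d = (a*d)*(b*c)) by ring; rewrite <- h in *; lra]).
      assert (0 < b * c) by nra. unfold K. rewrite !Rabs_pos_eq by lra. auto.
    - right. assert (b * c < 0) by nra. unfold K. rewrite !Rabs_left by lra. auto. }
  assert (HK2 : K ^ 2 - 1 = 4 * (a * b * c * d)) by (destruct Hsg as [[h1 [h2 ->]]|[h1 [h2 ->]]]; nra).
  split; [exact HK2|]. split; [destruct Hsg as [[h1 [h2 ->]]|[h1 [h2 ->]]]; nra|].
  unfold arcosh, v. fold K.
  set (sA := sqrt (Rabs (a * d))). set (sB := sqrt (Rabs (b * c))).
  assert (HA : sA ^ 2 = Rabs (a * d)) by (apply pow2_sqrt, Rabs_pos).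
  assert (HB : sB ^ 2 = Rabs (b * c)) by (apply pow2_sqrt, Rabs_pos).
  assert (0 <= sA) by apply sqrt_pos. assert (0 <= sB) by apply sqrt_pos.
  assert (Hprod : Rabs (a * d) * Rabs (b * c) = a * b * c * d).
  { rewrite <- Rabs_mult. rewrite Rabs_pos_eq; [ring|]. replace (a * d * (b * c)) with (a * b * c * d) by ring. lra. }
  replace (K ^ 2 - 1) with ((2 * sA * sB) ^ 2).
  2:{ rewrite HK2. replace ((2 * sA * sB) ^ 2) with (4 * (sA ^ 2 * sB ^ 2)) by ring. rewrite HA, HB, Hprod. ring. }
  rewrite sqrt_pow2 by nra.
  replace (K + 2 * sA * sB) with ((sA + sB) ^ 2).
  2:{ unfold K. rewrite <- HA, <- HB. ring. }
  rewrite ln_pow.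
  - simpl INR. ring.
  - destruct Hsg as [[h1 [h2 _]]|[h1 [h2 _]]].
    + assert (0 < sA) by (apply sqrt_lt_R0; rewrite Rabs_pos_eq; lra). lra.
    + assert (0 < sA) by (apply sqrt_lt_R0; rewrite Rabs_left; lra). lra.
Qed.

Lemma diffsq (a b c d y : R) : d ^ 2 + c ^ 2 * y ^ 2 <> 0 ->
  ((b * d + a * c * y ^ 2) / (d ^ 2 + c ^ 2 * y ^ 2)) ^ 2
  - 4 * (a * b * c * d) * (y * 1 / (d ^ 2 + c ^ 2 * y ^ 2)) ^ 2
  = (b * d - a * c * y ^ 2) ^ 2 / (d ^ 2 + c ^ 2 * y ^ 2) ^ 2.
Proof. intros HD. field. intro e; apply HD; rewrite <- e; ring. Qed.

Theorem proposition4p4 (a b c d : R) (hdet : a * d - b * c = 1)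
  (hS : ~ in_S a b c d) :
  Finite (v a b c d) =
    Rbar_mult (/ 2) (hdist_sets (mob_image a b c d imag_axis) imag_axis)
  /\ 0 < v a b c d.
Proof.
  assert (HP : 0 < a * b * c * d).
  { destruct (Rtotal_order (a * b * c * d) 0) as [h|[h|h]]; auto; exfalso; apply hS.
    - right.
      assert (hac : a * c <> 0) by (intro e; assert (a*b*c*d = (a*c)*(b*d)) by ring; rewrite e in *; lra).
      assert (ha : a <> 0) by (intro e; apply hac; rewrite e; ring).
      assert (hc' : c <> 0) by (intro e; apply hac; rewrite e; ring).
      assert (hc : c <> 0) by (intro e; apply hac; rewrite e; ring).
      set (q := - (b * d) / (a * c)).
      assert (hq : 0 < q).
      { replace q with (- (a * b * c * d) / ((a * c) ^ 2)) by (unfold q; field; repeat split; auto).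
        apply Rdiv_lt_0_compat; [lra|]. apply pow2_gt_0; auto. }
      assert (hy : 0 < sqrt q) by (apply sqrt_lt_R0; auto).
      pose proof (Dpos c d (sqrt q) hc hy) as HD.
      exists (sqrt q), (sqrt q * (a * d - b * c) / (d ^ 2 + c ^ 2 * sqrt q ^ 2)).
      split; [auto|]. split.
      + rewrite hdet. apply Rdiv_lt_0_compat; lra.
      + rewrite mob_iy by lra. f_equal. rewrite pow2_sqrt by lra. unfold q. field. split; [auto|split; [auto|]].
        assert (hd : d <> 0) by (intro e; rewrite e in h; lra).
        replace (d ^ 2 * a + c * - (b * d)) with (d * (a * d - b * c)) by ring. rewrite hdet. lra.
    - left. unfold in_s. exact h. }
  assert (hc : c <> 0) by (intro e; rewrite e in HP; lra).
  destruct (Kfacts a b c d hdet HP) as [HK2 [HK1 HKv]].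
  set (K := Rabs (a * d) + Rabs (b * c)) in *.
  assert (Hglb : hdist_sets (mob_image a b c d imag_axis) imag_axis = Finite (arcosh K)).
  { unfold hdist_sets. apply is_glb_Rbar_unique. split.
    - intros r [z [w [Hz [Hw ->]]]]. destruct Hz as [w' [Hw' ->]].
      destruct w' as [p y]; destruct Hw' as [Hp Hy]; simpl in Hp, Hy; subst p.
      destruct w as [p t]; destruct Hw as [Hp Ht]; simpl in Hp, Ht; subst p.
      pose proof (Dpos c d y hc Hy) as HD.
      rewrite mob_iy by lra. rewrite hdet. rewrite dH_form. cbn [Rbar_le].
      apply arcosh_le; [lra|].
      pose proof (diffsq a b c d y ltac:(lra)) as Hd.
      set (X := (b * d + a * c * y ^ 2) / (d ^ 2 + c ^ 2 * y ^ 2)) in *.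
      set (Y := y * 1 / (d ^ 2 + c ^ 2 * y ^ 2)) in *.
      assert (HY : 0 < Y) by (unfold Y; apply Rdiv_lt_0_compat; lra).
      assert (HX : 0 <= X ^ 2 - (K ^ 2 - 1) * Y ^ 2).
      { rewrite HK2, Hd. apply Rdiv_le_0_compat; [apply pow2_ge_0|]. apply pow_lt; lra. }
      assert (E : 1 + (X ^ 2 + (Y - t) ^ 2) / (2 * Y * t) - K
                  = (X ^ 2 + Y ^ 2 + t ^ 2 - 2 * K * Y * t) / (2 * Y * t)) by (field; lra).
      assert (0 <= (X ^ 2 + Y ^ 2 + t ^ 2 - 2 * K * Y * t) / (2 * Y * t)).
      { apply Rdiv_le_0_compat; [|nra]. pose proof (pow2_ge_0 (t - K * Y)). nra. }
      lra.
    - intros b0 Hb.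
      assert (hac : a * c <> 0) by (intro e; assert (a*b*c*d = (a*c)*(b*d)) by ring; rewrite e in *; lra).
      assert (ha : a <> 0) by (intro e; apply hac; rewrite e; ring).
      assert (hc' : c <> 0) by (intro e; apply hac; rewrite e; ring).
      set (q := b * d / (a * c)).
      assert (hq : 0 < q).
      { replace q with ((a * b * c * d) / ((a * c) ^ 2)) by (unfold q; field; repeat split; auto).
        apply Rdiv_lt_0_compat; [lra|]. apply pow2_gt_0; auto. }
      set (y0 := sqrt q).
      assert (hy : 0 < y0) by (apply sqrt_lt_R0; auto).
      assert (hy2 : y0 ^ 2 = q) by (apply pow2_sqrt; lra).
      pose proof (Dpos c d y0 hc hy) as HD.
      pose proof (diffsq a b c d y0 ltac:(lra)) as Hd.
      set (X := (b * d + a * c * y0 ^ 2) / (d ^ 2 + c ^ 2 * y0 ^ 2)) in *.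
      set (Y := y0 * 1 / (d ^ 2 + c ^ 2 * y0 ^ 2)) in *.
      assert (HY : 0 < Y) by (unfold Y; apply Rdiv_lt_0_compat; lra).
      assert (HX : X ^ 2 = (K ^ 2 - 1) * Y ^ 2).
      { rewrite HK2. assert (b * d - a * c * y0 ^ 2 = 0) by (rewrite hy2; unfold q; field; repeat split; auto).
        rewrite H, pow_i in Hd by lia. unfold Rdiv in Hd. rewrite Rmult_0_l in Hd. lra. }
      assert (E : dH (mobius a b c d (0, y0)) (0, K * Y) = arcosh K).
      { rewrite mob_iy by lra. rewrite hdet. fold Y. fold X. rewrite dH_form. f_equal.
        rewrite HX. field. lra. }
      rewrite <- E. apply Hb. exists (mobius a b c d (0, y0)), (0, K * Y).
      split; [exists (0, y0); split; [split; simpl; auto|reflexivity]|].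
      split; [split; simpl; [reflexivity| nra]|reflexivity]. }
  rewrite Hglb. split.
  - simpl. f_equal. lra.
  - assert (0 < arcosh K).
    { unfold arcosh. rewrite <- ln_1. apply ln_increasing; [lra|].
      pose proof (sqrt_pos (K ^ 2 - 1)). lra. }
    lra.
Qed.
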